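(* Let $q$ be a prime power, $t\ge1$, $s<t$ a nonnegative integer, and $W=\{0,w_1,\dots,w_{q^s-1}\}$ an $\mathbb{F}_q$-subspace of $\mathbb{F}_{q^t}$ of dimension $s$. Let $A\subseteq\mathbb{F}_{q^t}$, $\alpha^*\in A$, let $\{\beta_1,\dots,\beta_t\}$ be an arbitrary $\mathbb{F}_q$-basis of $\mathbb{F}_{q^t}$, and for $i=1,\dots,t$ let \[ g_i(x)=\beta_i\prod_{j=1}^{q^s-1}\Big(x-\big(\alpha^*-w_j^{-1}\beta_i\big)\Big). \] Then for every $\alpha\in A\setminus\{\alpha^*\}$, the set $\{g_1(\alpha),\dots,g_t(\alpha)\}$ has rank at most $t-s$ over $\mathbb{F}_q$. *)

(* Defs.v *)
From HB Require Import structures.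
From mathcomp Require Import all_boot all_order all_algebra all_field.
Set Implicit Arguments. Unset Strict Implicit. Unset Printing Implicit Defensive.
Import GRing.Theory.
Local Open Scope ring_scope.

(* g_i(x) = beta_i * prod_{j=1}^{q^s-1} (x - (astar - w_j^{-1} beta_i)),
   where ws = [w_1; ...; w_{q^s-1}] enumerates the nonzero elements of W. *)
Definition gfun (F : fieldType) (L : fieldExtType F) (ws : seq L)
  (astar b x : L) : L :=
  b * \prod_(w <- ws) (x - (astar - w^-1 * b)).

(* Main.v *)
Require Import Defs.
From HB Require Import structures.
From mathcomp Require Import all_boot all_order all_algebra all_field.
From mathcomp Require Import ring zify.
Set Implicit Arguments. Unset Strict Implicit. Unset Printing Implicit Defensive.
Import GRing.Theory.
Local Open Scope ring_scope.

Lemma perm_bij (T : eqType) (s : seq T) (P : pred T) (h hi : T -> T) :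
  uniq s -> s =i P -> cancel h hi -> cancel hi h -> (forall w, P (h w) = P w) ->
  perm_eq (map h s) s.
Proof.
move=> us sP hk hik hP; apply: uniq_perm; first by rewrite map_inj_uniq ?us //; exact: can_inj hk.
  exact: us.
move=> x; apply/mapP/idP => [[w]|xs].
  by rewrite !sP => wW ->; rewrite unfold_in hP.
exists (hi x); last by rewrite hik.
by move: xs; rewrite !sP !unfold_in -(hP (hi x)) hik.
Qed.

Lemma prod_scale (R : comRingType) (s : seq R) (b : R) (G : R -> R) :
  \prod_(w <- s) (b * G w) = b ^+ size s * \prod_(w <- s) G w.
Proof.
elim: s => [|x s IH]; first by rewrite !big_nil mulr1.
by rewrite !big_cons IH exprS; ring.
Qed.

Section Sub.
Variables (F : finFieldType) (L : fieldExtType F) (W : {vspace L}) (ws : seq L).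
Hypothesis hws_uniq : uniq ws.
Hypothesis hws : forall w : L, (w \in ws) = (w \in W) && (w != 0).

Let ws0 := 0 :: ws.
Lemma ws0_uniq : uniq ws0.
Proof. by rewrite /= hws_uniq hws eqxx andbF. Qed.
Lemma ws0_mem w : (w \in ws0) = (w \in W).
Proof. by rewrite inE hws; case: (eqVneq w 0) => [->|nz]; rewrite ?mem0v ?andbT. Qed.

Definition fW (u : L) := \prod_(w <- ws0) (u - w).

Lemma fW_W x : x \in W -> fW x = 0.
Proof.
move=> xW; apply/eqP; rewrite prodf_seq_eq0; apply/hasP; exists x.
  by rewrite ws0_mem.
by rewrite subrr eqxx.
Qed.

Lemma ws0_mem' : ws0 =i [pred w | w \in W].
Proof. by move=> w; rewrite ws0_mem. Qed.

Lemma fW_transl x y : x \in W -> fW (x + y) = fW y.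
Proof.
move=> xW; rewrite /fW.
have hk : cancel (fun w => w - x) (fun w => w + x) by move=> w; rewrite subrK.
have hik : cancel (fun w => w + x) (fun w => w - x) by move=> w; rewrite addrK.
have hP : forall w, [pred w | w \in W] (w - x) = [pred w | w \in W] w.
  by move=> w /=; rewrite rpredBr.
have hP' : forall w, [pred w | w \in W] (w + x) = [pred w | w \in W] w.
  by move=> w /=; rewrite rpredDr.
rewrite -(perm_big _ (perm_bij ws0_uniq ws0_mem' hik hk hP')) big_map.
by apply: eq_bigr => w _; ring.
Qed.

Lemma fW_add x y : fW (x + y) = fW x + fW y.
Proof.
pose p1 := \prod_(w <- ws0) ('X - (w - y)%:P).
pose p2 := \prod_(w <- ws0) ('X - w%:P).
pose P := p1 - p2 - (fW y)%:P.
have eP z : P.[z] = fW (z + y) - fW z - fW y.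
  rewrite /P !hornerE /p1 /p2 !horner_prod /fW; congr (_ - _ - _).
  by apply: eq_bigr => w _; rewrite !hornerE; ring.
  by apply: eq_bigr => w _; rewrite !hornerE.
have szP : (size P <= size ws0)%N.
  apply/leq_sizeP => j hj.
  rewrite /P !coefB coefC.
  have -> : (j == 0%N) = false by case: j hj.
  rewrite subr0.
  have s1 : size p1 = (size ws0).+1 by rewrite size_prod_XsubC.
  have s2 : size p2 = (size ws0).+1 by rewrite size_prod_XsubC.
  move: hj; rewrite leq_eqVlt => /orP[/eqP <-|hj].
    have := lead_coef_prod_XsubC ws0 xpredT (fun w => w - y).
    have := lead_coef_prod_XsubC ws0 xpredT (fun w => w).
    rewrite !lead_coefE -/p1 -/p2 s1 s2 /= => -> ->; by rewrite subrr.
  by rewrite !nth_default ?subrr ?s1 ?s2.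
have P0 : P = 0.
  apply: contraTeq szP => Pn0; rewrite -ltnNge.
  apply: max_poly_roots => //; last exact: ws0_uniq.
  apply/allP => z; rewrite ws0_mem => zW.
  by rewrite /root eP (fW_transl _ zW) (fW_W zW) subr0 subrr.
by apply/eqP; rewrite -subr_eq0 opprD addrA -eP P0 horner0.
Qed.

Lemma fW_scale (a : F) u : fW (a *: u) = a *: fW u.
Proof.
have f0 : fW 0 = 0 by apply: fW_W; rewrite mem0v.
case: (eqVneq a 0) => [->|an0]; first by rewrite !scale0r f0.
have bn0 : a%:A != 0 :> L by rewrite scaler_eq0 oner_eq0 orbF.
rewrite -(mulr_algl a u) -(mulr_algl a (fW u)).
set b : L := a%:A.
have hk : cancel (fun w => b * w) (fun w => b^-1 * w) by move=> w; rewrite mulKf.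
have hik : cancel (fun w => b^-1 * w) (fun w => b * w) by move=> w; rewrite mulVKf.
have hWb w : (b * w \in W) = (w \in W).
  rewrite /b mulr_algl; apply/idP/idP => [h|]; last exact: rpredZ.
  by rewrite -(scalerK an0 w); apply: rpredZ.
have hP : forall w, [pred w | w \in W] (b * w) = [pred w | w \in W] w by move=> w /=; rewrite hWb.
have hP2 : forall w, [pred w | (w \in W) && (w != 0)] (b * w) = [pred w | (w \in W) && (w != 0)] w.
  by move=> w /=; rewrite hWb mulf_eq0 negb_or bn0.
have hws' : ws =i [pred w | (w \in W) && (w != 0)] by move=> w; rewrite hws.
have bn : b ^+ size ws = 1.
  have e : \prod_(w <- map (fun w => b * w) ws) w = \prod_(w <- ws) w :=
    perm_big _ (perm_bij hws_uniq hws' hk hik hP2).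
  rewrite big_map /= prod_scale in e.
  have nz : \prod_(w <- ws) w != 0.
    by rewrite prodf_seq_neq0; apply/allP => w; rewrite hws => /andP[_ ->].
  by apply: (mulIf nz); rewrite mul1r e.
rewrite /fW -(perm_big _ (perm_bij ws0_uniq ws0_mem' hk hik hP)) big_map.
under eq_bigr do rewrite -mulrBr.
by rewrite prod_scale /= exprS bn mulr1.
Qed.

Variable K : L.
Definition psi (u : L) := K * fW u.
Lemma psi_linear : linear psi.
Proof. by move=> a u v; rewrite /psi fW_add fW_scale mulrDr scalerAr. Qed.
End Sub.

Definition psiP (F : finFieldType) (L : fieldExtType F) (ws : seq L) (K : L)
  (pf : linear (psi ws K)) := psi ws K.
HB.instance Definition _ (F : finFieldType) (L : fieldExtType F) (ws : seq L) (K : L)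
  (pf : linear (psi ws K)) := GRing.isLinear.Build F L L *:%R (psiP pf) pf.

Unset Implicit Arguments.

Theorem lemma6 (F : finFieldType) (L : fieldExtType F) (t s : nat)
  (ht : (1 <= t)%N) (hdim : \dim {:L} = t) (hs : (s < t)%N)
  (W : {vspace L}) (hW : \dim W = s)
  (ws : seq L) (hws_uniq : uniq ws)
  (hws : forall w : L, (w \in ws) = (w \in W) && (w != 0))
  (A : {pred L}) (astar : L) (hastar : astar \in A)
  (beta : t.-tuple L) (hbeta : basis_of fullv beta) :
  forall alpha : L, alpha \in A -> alpha != astar ->
    (\dim <<[seq gfun ws astar (tnth beta i) alpha | i : 'I_t]>>%VS <= t - s)%N.
Proof.
move=> alpha _ hne.
set g := alpha - astar.
have gn0 : g != 0 by rewrite subr_eq0.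
set K := g ^+ (size ws).+1 * (\prod_(w <- ws) w)^-1.
pose f : 'End(L) := linfun (psiP (psi_linear hws_uniq hws K)).
have fE v : f v = psi ws K v by rewrite lfunE.
have key b : gfun ws astar b alpha = psi ws K (b / g).
  set u := b / g.
  have hb : b = g * u by rewrite /u mulrC divfK.
  rewrite /gfun /psi /fW big_cons.
  have e1 : \prod_(w <- ws) (alpha - (astar - w^-1 * b)) =
            \prod_(w <- ws) (w^-1 * (g * (u + w))).
    rewrite big_seq_cond [RHS]big_seq_cond; apply: eq_bigr => w.
    rewrite andbT hws => /andP[_ wn0].
    rewrite hb /g; field.
    done.
  have hk : cancel (fun w : L => - w) (fun w => - w) by move=> w; rewrite opprK.
  have hP2 : forall w, [pred w | (w \in W) && (w != 0)] (- w) = [pred w | (w \in W) && (w != 0)] w.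
    by move=> w /=; rewrite rpredN oppr_eq0.
  have hws' : ws =i [pred w | (w \in W) && (w != 0)] by move=> w; rewrite hws.
  have e2 : \prod_(w <- ws) (u + w) = \prod_(w <- ws) (u - w).
    rewrite -(perm_big _ (perm_bij hws_uniq hws' hk hk hP2)) big_map.
    by [].
  rewrite e1 big_split /= prodfV prod_scale e2 hb /K subr0 exprS.
  ring.
have sub1 : (<<[seq gfun ws astar (tnth beta i) alpha | i : 'I_t]>> <= f @: fullv)%VS.
  apply/span_subvP => x /mapP[i _ ->].
  by rewrite key -fE memv_img ?memvf.
have sub2 : (W <= lker f)%VS.
  apply/subvP => w wW; rewrite memv_ker fE /psi (fW_W hws wW) mulr0 //.
have := limg_ker_dim f fullv; rewrite capfv hdim => hd.
have := dimvS sub1; have := dimvS sub2; rewrite hW; move: hd; set a := \dim (lker f); set b := \dim (limg f); set c := \dim _; lia.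
Qed.
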